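(* Let $\mathfrak{C}$ be a category and $\mathbb{K}$ a field. There is a one-to-one correspondence $\epsilon \leftrightarrow \mathfrak{I}_{\epsilon}$ between the idempotents $\epsilon$ of $m(\mathfrak{C})$ and the ideals $\mathfrak{I}_\epsilon$ of $\mathfrak{C}$ (including the empty ideal), given by $$\epsilon(x,y) = \begin{cases} 1, & \text{if } \exists xy \text{ and } xy \notin \mathfrak{I}_\epsilon, \\ 0, & \text{if } xy \text{ is not defined, or } \exists xy \text{ and } xy \in \mathfrak{I}_\epsilon, \end{cases}$$ and it satisfies $\mathfrak{I}_{\epsilon_1\epsilon_2} = \mathfrak{I}_{\epsilon_1} \cup \mathfrak{I}_{\epsilon_2}$ for idempotents $\epsilon_1,\epsilon_2$.
   Context: A semigroupoid is a set with a partially defined associative operation ($\exists xy$ means $xy$ is defined). A category is a semigroupoid where each $x$ has unique identities $r(x),d(x)$ with $r(x)x=x=xd(x)$, and $\exists xy$ iff $d(x)=r(y)$. A subset $\mathfrak{I}\subseteq\mathfrak{C}$ is an ideal if whenever $y\in\mathfrak{I}$ and $\exists xy$ (resp. $\exists yx$) then $xy\in\mathfrak{I}$ (resp. $yx\in\mathfrak{I}$). A $\mathbb{K}$-semigroup is a semigroup $S$ with zero and a scalar action $\mathbb{K}\times S\to S$ with $\alpha(\beta x)=(\alpha\beta)x$, $1x=x$, $\alpha(xy)=(\alpha x)y=x(\alpha y)$, $0_{\mathbb{K}}x=0$; $\mathbb{K}$-cancellative if $\alpha x=\beta x$, $x\neq0$ imply $\alpha=\beta$. A projective representation of $\mathfrak{C}$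 on a $\mathbb{K}$-cancellative semigroup $S$ is $\Gamma:\mathfrak{C}\to S$ with: if $\exists xy$ then $\Gamma(xy)=0\iff\Gamma(x)\Gamma(y)=0$; if $xy$ undefined then $\Gamma(x)\Gamma(y)=0$; and $\Gamma(x)\Gamma(y)=\Gamma(xy)\rho(x,y)$ with $\rho(x,y)\in\mathbb{K}^*$ whenever $\exists xy$, $\Gamma(xy)\ne0$. Its factor set is $\rho:\mathfrak{C}\times\mathfrak{C}\to\mathbb{K}$, extended by $0$ when $xy$ is undefined or $\Gamma(xy)=0$. $m(\mathfrak{C})$ is the set of all factor sets of projective representations of $\mathfrak{C}$, a commutative semigroup under pointwise multiplication. *)

(* Defs.v *)
From mathcomp Require Import all_boot all_algebra.
Set Implicit Arguments. Unset Strict Implicit. Unset Printing Implicit Defensive.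
Import GRing.Theory.
Local Open Scope ring_scope.

(* A category in the sense of the paper: a set with a partially defined
   associative product (mul x y = Some xy means "exists xy"), in which every x
   has unique identities r x, d x with r(x)x = x = x d(x), and xy is defined
   iff d x = r y. *)
Record category := Category {
  cat_car :> Type;
  cat_mul : cat_car -> cat_car -> option cat_car;
  cat_r : cat_car -> cat_car;
  cat_d : cat_car -> cat_car;
  cat_assoc : forall x y z xy yz, cat_mul x y = Some xy -> cat_mul y z = Some yz ->
     cat_mul xy z = cat_mul x yz;
  cat_def : forall x y, cat_mul x y <> None <-> cat_d x = cat_r y;
  cat_rx : forall x, cat_mul (cat_r x) x = Some x;
  cat_xd : forall x, cat_mul x (cat_d x) = Some x;
  cat_r_id : forall x z w, cat_mul (cat_r x) z = Some w -> w = z;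
  cat_r_id' : forall x z w, cat_mul z (cat_r x) = Some w -> w = z;
  cat_d_id : forall x z w, cat_mul (cat_d x) z = Some w -> w = z;
  cat_d_id' : forall x z w, cat_mul z (cat_d x) = Some w -> w = z;
  cat_r_uniq : forall x e,
     (forall z w, cat_mul e z = Some w -> w = z) ->
     (forall z w, cat_mul z e = Some w -> w = z) ->
     cat_mul e x = Some x -> e = cat_r x;
  cat_d_uniq : forall x e,
     (forall z w, cat_mul e z = Some w -> w = z) ->
     (forall z w, cat_mul z e = Some w -> w = z) ->
     cat_mul x e = Some x -> e = cat_d x
}.

Definition is_ideal (C : category) (I : C -> Prop) : Prop :=
  forall x y xy, cat_mul x y = Some xy -> (I y -> I xy) /\ (I x -> I xy).

Record ksemigroup (K : fieldType) := KSemigroup {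
  ks_car :> Type;
  ks_mul : ks_car -> ks_car -> ks_car;
  ks_zero : ks_car;
  ks_scale : K -> ks_car -> ks_car;
  ks_mulA : forall x y z, ks_mul x (ks_mul y z) = ks_mul (ks_mul x y) z;
  ks_mul0l : forall x, ks_mul ks_zero x = ks_zero;
  ks_mul0r : forall x, ks_mul x ks_zero = ks_zero;
  ks_scaleA : forall a b x, ks_scale a (ks_scale b x) = ks_scale (a * b) x;
  ks_scale1 : forall x, ks_scale 1 x = x;
  ks_scale_mull : forall a x y, ks_scale a (ks_mul x y) = ks_mul (ks_scale a x) y;
  ks_scale_mulr : forall a x y, ks_scale a (ks_mul x y) = ks_mul x (ks_scale a y);
  ks_scale0 : forall x, ks_scale 0 x = ks_zero
}.

Definition kcancellative (K : fieldType) (S : ksemigroup K) : Prop :=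
  forall (a b : K) (x : S), ks_scale a x = ks_scale b x -> x <> ks_zero S -> a = b.

Definition proj_rep (K : fieldType) (C : category) (S : ksemigroup K)
    (G : C -> S) : Prop :=
  forall x y,
    match cat_mul x y with
    | Some xy =>
        (G xy = ks_zero S <-> ks_mul (G x) (G y) = ks_zero S) /\
        (G xy <> ks_zero S ->
           exists a : K, a != 0 /\ ks_mul (G x) (G y) = ks_scale a (G xy))
    | None => ks_mul (G x) (G y) = ks_zero S
    end.

Definition is_factor_set (K : fieldType) (C : category) (S : ksemigroup K)
    (G : C -> S) (rho : C -> C -> K) : Prop :=
  forall x y,
    match cat_mul x y with
    | Some xy =>
        (G xy <> ks_zero S -> ks_mul (G x) (G y) = ks_scale (rho x y) (G xy)) /\
        (G xy = ks_zero S -> rho x y = 0)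
    | None => rho x y = 0
    end.

Definition in_mC (K : fieldType) (C : category) (rho : C -> C -> K) : Prop :=
  exists (S : ksemigroup K) (G : C -> S),
    kcancellative S /\ proj_rep G /\ is_factor_set G rho.

(* Idempotents of the commutative semigroup m(C) (pointwise product). *)
Definition idem_mC (K : fieldType) (C : category) (e : C -> C -> K) : Prop :=
  in_mC e /\ forall x y, e x y * e x y = e x y.

Definition eps_ideal (K : fieldType) (C : category) (e : C -> C -> K)
    (I : C -> Prop) : Prop :=
  forall x y,
    match cat_mul x y with
    | Some xy => (~ I xy -> e x y = 1) /\ (I xy -> e x y = 0)
    | None => e x y = 0
    end.

(* Main.v *)
Require Import Defs.
From mathcomp Require Import all_boot all_algebra.
From Stdlib Require Import Classical ClassicalEpsilon FunctionalExtensionality.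
Set Implicit Arguments. Unset Strict Implicit. Unset Printing Implicit Defensive.
Import GRing.Theory.
Local Open Scope ring_scope.

Lemma d_mul (C : category) (x y w : C) : cat_mul x y = Some w -> cat_d w = cat_d y.
Proof.
move=> H. have H2 := cat_assoc H (cat_xd y). rewrite H in H2.
symmetry. apply: cat_d_uniq; [exact: cat_d_id | exact: cat_d_id' | exact: H2].
Qed.

Lemma r_mul (C : category) (x y w : C) : cat_mul x y = Some w -> cat_r w = cat_r x.
Proof.
move=> H. have H2 := cat_assoc (cat_rx x) H. rewrite H in H2.
symmetry. apply: cat_r_uniq; [exact: cat_r_id | exact: cat_r_id' | by rewrite -H2].
Qed.

Definition dec (P : Prop) : bool := if excluded_middle_informative P then true else false.
Lemma decP (P : Prop) : reflect P (dec P).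
Proof. rewrite /dec; case: excluded_middle_informative => H; by constructor. Qed.

Definition cm (C : category) (I : C -> Prop) (x y : C) : option C :=
  match cat_mul x y with Some w => if dec (I w) then None else Some w | None => None end.

Lemma cm_assoc (C : category) (I : C -> Prop) (HI : is_ideal I) (x y z : C) :
  obind (fun w => cm I w z) (cm I x y) = obind (cm I x) (cm I y z).
Proof.
rewrite /cm. case Exy: (cat_mul x y) => [w|]; case Eyz: (cat_mul y z) => [u|].
- have A := cat_assoc Exy Eyz.
  case: (decP (I w)) => Iw; case: (decP (I u)) => Iu /=; rewrite ?A //;
  case E: (cat_mul x u) => [v|] //; case: (decP (I v)) => Iv //; exfalso; apply: Iv;
    first [ exact: (HI _ _ _ E).1 Iu | rewrite -A in E; exact: (HI _ _ _ E).2 Iw ].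
- case: (decP (I w)) => Iw //=.
  case E: (cat_mul w z) => [v|] //.
  have h1 : cat_d w = cat_r z by apply/cat_def; rewrite E.
  have : cat_mul y z <> None by apply/cat_def; rewrite -(d_mul Exy).
  by rewrite Eyz.
- case: (decP (I u)) => Iu //=.
  case E: (cat_mul x u) => [v|] //.
  have h1 : cat_d x = cat_r u by apply/cat_def; rewrite E.
  have : cat_mul x y <> None by apply/cat_def; rewrite -(r_mul Eyz).
  by rewrite Exy.
- by [].
Qed.

Definition nzK (K : fieldType) := {a : K | a != 0}.
Lemma nz_eq (K : fieldType) (a b : nzK K) : proj1_sig a = proj1_sig b -> a = b.
Proof. case: a b => a Ha [b Hb] /= E; subst; f_equal; apply: eq_irrelevance. Qed.
Definition nzmul (K : fieldType) (a b : nzK K) : nzK K :=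
  exist _ (proj1_sig a * proj1_sig b) (mulf_neq0 (proj2_sig a) (proj2_sig b)).
Definition nzone (K : fieldType) : nzK K := exist _ 1 (oner_neq0 K).

Definition Scar (C : category) (K : fieldType) := option (nzK K * C).
Definition Smul (C : category) (K : fieldType) (I : C -> Prop) (p q : Scar C K) : Scar C K :=
  match p, q with
  | Some (a, x), Some (b, y) =>
     match cm I x y with Some w => Some (nzmul a b, w) | None => None end
  | _, _ => None end.
Definition Sscale (C : category) (K : fieldType) (c : K) (p : Scar C K) : Scar C K :=
  match p with
  | Some (a, x) => match excluded_middle_informative (c != 0) with
     | left H => Some (exist _ (c * proj1_sig a) (mulf_neq0 H (proj2_sig a)), x)
     | right _ => None end
  | None => None end.

Lemma nnz (K : fieldType) (a : K) : ~ (a != 0) -> a = 0.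
Proof. by case: (eqVneq a 0). Qed.

Lemma SmulA (C : category) (K : fieldType) (I : C -> Prop) (HI : is_ideal I) (p q r : Scar C K) :
  Smul I p (Smul I q r) = Smul I (Smul I p q) r.
Proof.
case: p => [[a x]|]; case: q => [[b y]|]; case: r => [[c z]|] //=;
  try by case: (cm I _ _).
move: (cm_assoc HI x y z).
case: (cm I x y) => [w|]; case: (cm I y z) => [u|] /= H; rewrite ?H //=.
- case: (cm I x u) => [v|] //; congr (Some (_, _)); apply: nz_eq; by rewrite /= mulrA.
- by rewrite -H.
Qed.

Lemma Smul0r (C : category) (K : fieldType) (I : C -> Prop) (p : Scar C K) : Smul I p None = None.
Proof. by case: p => [[a x]|]. Qed.

Lemma SscaleA (C : category) (K : fieldType) (a b : K) (p : Scar C K) :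
  Sscale a (Sscale b p) = Sscale (a * b) p.
Proof.
case: p => [[u z]|] //=.
case: (excluded_middle_informative (b != 0)) => Hb /=;
case: (excluded_middle_informative (a != 0)) => Ha /=;
case: (excluded_middle_informative (a * b != 0)) => Hab //=.
- congr (Some (_, _)); apply: nz_eq; by rewrite /= mulrA.
all: exfalso; first [ by apply: Hab; rewrite mulf_neq0
  | by move: Hab; rewrite (nnz Ha) mul0r eqxx | by move: Hab; rewrite (nnz Hb) mulr0 eqxx ].
Qed.

Lemma Sscale1 (C : category) (K : fieldType) (p : Scar C K) : Sscale 1 p = p.
Proof.
case: p => [[u z]|] //=.
case: (excluded_middle_informative (1 != 0)) => H.
- congr (Some (_, _)); apply: nz_eq; by rewrite /= mul1r.
- by case: H; rewrite oner_neq0.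
Qed.

Lemma Sscale_mull (C : category) (K : fieldType) (I : C -> Prop) (c : K) (p q : Scar C K) :
  Sscale c (Smul I p q) = Smul I (Sscale c p) q.
Proof.
case: q => [[b y]|]; last by rewrite !Smul0r; case: p => [[a x]|].
case: p => [[a x]|] //=.
case: (excluded_middle_informative (c != 0)) => Hc /=; case: (cm I x y) => [w|] //=;
try by case: (excluded_middle_informative (c != 0)).
case: (excluded_middle_informative (c != 0)) => Hc' //=.
congr (Some (_, _)); apply: nz_eq; by rewrite /= mulrA.
Qed.

Lemma Sscale_mulr (C : category) (K : fieldType) (I : C -> Prop) (c : K) (p q : Scar C K) :
  Sscale c (Smul I p q) = Smul I p (Sscale c q).
Proof.
case: q => [[b y]|]; last by rewrite !Smul0r; case: p => [[a x]|].
case: p => [[a x]|] //=.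
case: (excluded_middle_informative (c != 0)) => Hc /=; case: (cm I x y) => [w|] //=;
try by case: (excluded_middle_informative (c != 0)).
case: (excluded_middle_informative (c != 0)) => Hc' //=.
congr (Some (_, _)); apply: nz_eq; by rewrite /= mulrCA.
Qed.

Lemma Sscale0 (C : category) (K : fieldType) (p : Scar C K) : Sscale 0 p = None.
Proof.
case: p => [[u z]|] //=.
case: (excluded_middle_informative (0 != 0)) => H //.
by exfalso; move: H; rewrite eqxx.
Qed.

Definition Sks (C : category) (K : fieldType) (I : C -> Prop) (HI : is_ideal I) : ksemigroup K :=
  @KSemigroup K (Scar C K) (Smul I) None (@Sscale C K) (SmulA HI) (fun _ => erefl)
    (@Smul0r C K I) (@SscaleA C K) (@Sscale1 C K) (@Sscale_mull C K I) (@Sscale_mulr C K I)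
    (@Sscale0 C K).

Lemma Sks_canc (C : category) (K : fieldType) (I : C -> Prop) (HI : is_ideal I) :
  kcancellative (Sks K HI).
Proof.
move=> a b [[u z]|] //= E _; move: E.
case: (excluded_middle_informative (a != 0)) => Ha;
case: (excluded_middle_informative (b != 0)) => Hb //= E.
- have := f_equal (fun p : Scar C K => if p is Some (v, _) then proj1_sig v else 0) E => /=.
  by apply: mulIf; exact: (proj2_sig u).
- by rewrite (nnz Ha) (nnz Hb).
Qed.

Definition Gf (C : category) (K : fieldType) (I : C -> Prop) (z : C) : Scar C K :=
  if dec (I z) then None else Some (nzone K, z).

Definition eI (C : category) (K : fieldType) (I : C -> Prop) (x y : C) : K :=
  match cat_mul x y with Some w => if dec (I w) then 0 else 1 | None => 0 end.

Lemma GG (C : category) (K : fieldType) (I : C -> Prop) (HI : is_ideal I) (x y w : C) :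
  cat_mul x y = Some w ->
  Smul I (Gf K I x) (Gf K I y) = if dec (I w) then None else Some (nzmul (nzone K) (nzone K), w).
Proof.
move=> E; rewrite /Gf.
case: (decP (I x)) => Ix.
  by case: (decP (I w)) => // Iw; exfalso; apply: Iw; exact: (HI _ _ _ E).2 Ix.
case: (decP (I y)) => Iy.
  by rewrite Smul0r; case: (decP (I w)) => // Iw; exfalso; apply: Iw; exact: (HI _ _ _ E).1 Iy.
by rewrite /Smul /cm E; case: (dec (I w)).
Qed.

Lemma part2 (C : category) (K : fieldType) (I : C -> Prop) (HI : is_ideal I) :
  idem_mC (eI K I) /\ eps_ideal (eI K I) I /\
  (forall f : C -> C -> K, idem_mC f -> eps_ideal f I -> forall x y, f x y = eI K I x y).
Proof.
have scale1G : forall w, ~ I w -> Some (nzmul (nzone K) (nzone K), w) = Sscale 1 (Gf K I w).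
  move=> w Iw; rewrite /Gf; case: (decP (I w)) => // _ /=.
  case: (excluded_middle_informative (1 != 0)) => H.
    congr (Some (_, _)); apply: nz_eq; by rewrite /= !mul1r.
  by case: H; rewrite oner_neq0.
split; [split|split].
- exists (Sks K HI), (Gf K I); split; first exact: Sks_canc.
  split.
  + move=> x y /=; case E: (cat_mul x y) => [w|].
      rewrite (@GG _ K _ HI _ _ _ E) /=. split.
        rewrite /Gf; case: (decP (I w)) => //; split; discriminate.
      move=> Hw; exists 1; split; first exact: oner_neq0.
      case: (decP (I w)) => Iw; last exact: scale1G.
      by case: Hw; rewrite /Gf; case: (decP (I w)).
    rewrite /Gf; case: (decP (I x)) => //= _; case: (decP (I y)) => //= _.
    by rewrite /cm E.
  + move=> x y /=; rewrite /eI; case E: (cat_mul x y) => [w|] //.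
    split.
      move=> Hw; rewrite (@GG _ K _ HI _ _ _ E); case: (decP (I w)) => Iw; last exact: scale1G.
      by case: Hw; rewrite /Gf; case: (decP (I w)).
    by rewrite /Gf; case: (decP (I w)).
- move=> x y; rewrite /eI; case: (cat_mul x y) => [w|]; last by rewrite mulr0.
  by case: (decP (I w)); rewrite ?mulr0 ?mulr1.
- move=> x y; rewrite /eI; case: (cat_mul x y) => [w|] //.
  by case: (decP (I w)).
- move=> f _ Hf x y; move: (Hf x y); rewrite /eI; case: (cat_mul x y) => [w|] //.
  case: (decP (I w)) => Iw [H1 H2]; [exact: H2 | exact: H1].
Qed.

Lemma e01 (K : fieldType) (a : K) : a * a = a -> a != 0 -> a = 1.
Proof. by move=> H Ha; apply: (mulfI Ha); rewrite mulr1. Qed.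

Theorem mainTheorem6 (C : category) (K : fieldType) :
  (* every idempotent determines a unique ideal *)
  (forall e : C -> C -> K, idem_mC e ->
     exists I : C -> Prop, is_ideal I /\ eps_ideal e I /\
       forall J : C -> Prop, is_ideal J -> eps_ideal e J -> forall z, J z <-> I z) /\
  (* every ideal determines a unique idempotent *)
  (forall I : C -> Prop, is_ideal I ->
     exists e : C -> C -> K, idem_mC e /\ eps_ideal e I /\
       forall f : C -> C -> K, idem_mC f -> eps_ideal f I -> forall x y, f x y = e x y) /\
  (* I_{e1 e2} = I_{e1} \cup I_{e2} *)
  (forall (e1 e2 : C -> C -> K) (I1 I2 : C -> Prop),
     idem_mC e1 -> idem_mC e2 -> is_ideal I1 -> is_ideal I2 ->
     eps_ideal e1 I1 -> eps_ideal e2 I2 ->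
     idem_mC (fun x y => e1 x y * e2 x y) /\
     eps_ideal (fun x y => e1 x y * e2 x y) (fun z => I1 z \/ I2 z)).
Proof.
split; [|split].
- move=> e [[S [G [_ [HG Hfs]]]] Hid].
  have Iid : is_ideal (fun z => G z = ks_zero S).
    move=> x y xy H; have := HG x y; rewrite H => -[[_ Hiff] _]; split=> Hz.
      by apply: Hiff; rewrite Hz ks_mul0r.
    by apply: Hiff; rewrite Hz ks_mul0l.
  have epsI : eps_ideal e (fun z => G z = ks_zero S).
    move=> x y; have := HG x y; have := Hfs x y; case: (cat_mul x y) => [w|] //.
    move=> [F1 F2] [[P1 P2] _]; split; last exact: F2.
    move=> nI; apply: e01 (Hid x y) _; apply/eqP => e0.
    by have F := F1 nI; apply: nI; apply: P2; rewrite F e0 ks_scale0.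
  exists (fun z => G z = ks_zero S); split; first exact: Iid.
  split; first exact: epsI.
  move=> J HJi HJe z.
  have Ez := cat_rx z.
  have HJ := HJe (cat_r z) z; rewrite Ez in HJ.
  have HI := epsI (cat_r z) z; rewrite Ez in HI.
  split=> Hz.
  + apply: NNPP => nI. have h := HI.1 nI. rewrite (HJ.2 Hz) in h.
    by move: (oner_neq0 K); rewrite -h eqxx.
  + apply: NNPP => nJ. have h := HJ.1 nJ. rewrite (HI.2 Hz) in h.
    by move: (oner_neq0 K); rewrite -h eqxx.
- move=> I HI; exists (eI K I); exact: part2.
- move=> e1 e2 I1 I2 _ _ HI1 HI2 H1 H2.
  have HU : is_ideal (fun z => I1 z \/ I2 z).
    move=> x y xy H; have [a1 b1] := HI1 x y xy H; have [a2 b2] := HI2 x y xy H.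
    by split=> -[h|h]; [left; exact: a1 | right; exact: a2 | left; exact: b1 | right; exact: b2].
  have E : (fun x y => e1 x y * e2 x y) = eI K (fun z => I1 z \/ I2 z).
    apply: functional_extensionality => x; apply: functional_extensionality => y.
    move: (H1 x y) (H2 x y); rewrite /eI; case: (cat_mul x y) => [w|]; last by move=> -> ->; rewrite mulr0.
    case: (decP (I1 w \/ I2 w)) => Iw [a1 b1] [a2 b2].
      by case: Iw => h; [rewrite b1 // mul0r | rewrite b2 // mulr0].
    rewrite a1 ?a2 ?mulr1 // => h; apply: Iw; [right | left]; exact: h.
  rewrite E; have [P1 [P2 _]] := part2 K HU; split; [exact: P1 | exact: P2].
Qed.
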